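(* Consider the P-SSD algorithm described in the context, executed over a constant (time-invariant) strongly connected digraph $G$ with diameter $d$, and let $C_{\mathrm{SSD}}=\mathrm{SSD}(D(X),D(Y))$. Then: (a) for all $k\ge d+1$ and all $i\in\{1,\dots,M\}$, $\mathcal{R}(C_k^i)=\mathcal{R}(C_{\mathrm{SSD}})$ and $\mathcal{R}(D(X)C_k^i)=\mathcal{R}(D(Y)C_k^i)$; (b) $\mathrm{flag}_{d+2}^i=1$ for each $i\in\{1,\dots,M\}$.
   Context: Data setting: a map $T:\mathcal{M}\to\mathcal{M}$, $\mathcal{M}\subseteq\mathbb{R}^n$; a dictionary $D(x)=[d_1(x),\dots,d_{N_d}(x)]$ of real-valued functions on $\mathcal{M}$; data matrices $X,Y\in\mathbb{R}^{N\times n}$ whose $i$-th rows $x_i^T,y_i^T$ satisfy $y_i=T(x_i)$; $D(X)\in\mathbb{R}^{N\times N_d}$ is the matrix with rows $D(x_1),\dots,D(x_N)$ (similarly $D(Y)$). Assumption: $D(X)$ and $D(Y)$ have full column rank. There are $M$ agents; agent $i$ holds local dictionary snapshots $D(X_i),D(Y_i)$ (obtained from a subset of the snapshot pairs) such that the union over $i$ of the rows of $[D(X_i),D(Y_i)]$ equals the set of rows of $[D(X),D(Y)]$. There are signature matrices $D(X_s),D(Y_s)$ with full column rank such that the rows of $[D(X_s),D(Y_s)]$ are contained in the rows of $[D(X_i),D(Y_i)]$ for every $i$. SSD algorithm: given $A,B\in\mathbb{R}^{m\times q}$, set $A_1=A$, $B_1=B$, $C=I_q$, and iterate: let $[Z^A_j;Z^B_j]$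 be a matrix whose columns form a basis of the null space of $[A_j,B_j]$ (with $Z^A_j$ having as many rows as $A_j$ has columns); if the null space is trivial return $0$; if the number of rows of $Z^A_j$ is at most its number of columns, return $C$; otherwise set $C\leftarrow CZ^A_j$, $A_{j+1}=A_jZ^A_j$, $B_{j+1}=B_jZ^A_j$. Its output is denoted $\mathrm{SSD}(A,B)$. P-SSD algorithm: at iteration $k\ge1$ the digraph $G_k$ is used; an edge $(j,i)\in E_k$ means $j$ is an in-neighbor of $i$, and $\mathcal{N}_{\mathrm{in}}^k(i)$ denotes the in-neighbors of $i$ in $G_k$. Each agent $i$ sets $C_0^i=I_{N_d}$, $\mathrm{flag}_0^i=0$, and for $k=1,2,\dots$: receives $C_{k-1}^j$ for $j\in\mathcal{N}_{\mathrm{in}}^k(i)$; sets $D_k^i=\mathrm{basis}\big(\bigcap_{j\in\{i\}\cup\mathcal{N}_{\mathrm{in}}^k(i)}\mathcal{R}(C_{k-1}^j)\big)$; sets $E_k^i=\mathrm{SSD}(D(X_i)D_k^i,D(Y_i)D_k^i)$; if the number of columns of $D_k^iE_k^i$ is strictly less than that of $C_{k-1}^i$, sets $C_k^i=D_k^iE_k^i$ and $\mathrm{flag}_k^i=0$; otherwise sets $C_k^i=C_{k-1}^i$ and $\mathrm{flag}_k^i=1$; then transmits $C_k^i$ to its out-neighbors. Here $\mathrm{basis}(\mathcal{A})$ returns a matrix whose columns form a basis of the subspace $\mathcal{A}$, and returns $0$ if $\mathcal{A}=\{0\}$; the matrix $0$ is regarded as having $0$ columns. $\mathcal{R}(\cdot)$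 denotes range space. A digraph is strongly connected if there is a directed path from every node to every other node; its diameter is the maximum over ordered pairs of nodes of the length of a shortest directed path between them. *)

(* Defs.v *)
From HB Require Import structures.
From mathcomp Require Import all_boot all_order all_algebra.
From mathcomp Require Import reals.
Set Implicit Arguments. Unset Strict Implicit. Unset Printing Implicit Defensive.
Import GRing.Theory Num.Theory.
Local Open Scope ring_scope.

Definition in_range (R : fieldType) (n p : nat) (C : 'M[R]_(n, p)) (v : 'cV[R]_n) : Prop :=
  exists c : 'cV[R]_p, v = C *m c.

Definition range_eq (R : fieldType) (n p1 p2 : nat)
  (C1 : 'M[R]_(n, p1)) (C2 : 'M[R]_(n, p2)) : Prop :=
  forall v : 'cV[R]_n, in_range C1 v <-> in_range C2 v.

Definition lin_indep_cols (R : fieldType) (s p : nat) (Z : 'M[R]_(s, p)) : Prop :=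
  forall c : 'cV[R]_p, Z *m c = 0 -> c = 0.

Definition basis_of (R : fieldType) (s p : nat) (S : 'cV[R]_s -> Prop) (Z : 'M[R]_(s, p)) : Prop :=
  lin_indep_cols Z /\ (forall v : 'cV[R]_s, S v <-> in_range Z v).

Definition nullspace_basis (R : fieldType) (r s p : nat) (M : 'M[R]_(r, s)) (Z : 'M[R]_(s, p)) : Prop :=
  basis_of (fun v => M *m v = 0) Z.

Definition full_col_rank (R : fieldType) (m q : nat) (A : 'M[R]_(m, q)) : Prop :=
  \rank A = q.

Definition rows_in (R : Type) (m1 m2 q : nat) (A : 'M[R]_(m1, q)) (B : 'M[R]_(m2, q)) : Prop :=
  forall j : 'I_m1, exists k : 'I_m2, row j A = row k B.

(* ---------- The SSD algorithm (as a relation: any choice of null-space bases) ----------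
   ssd_run C A B res : starting from the current state (C, A_j = A, B_j = B),
   the algorithm may return res.  Returned matrices are packed with their
   number of columns; "return 0" is the matrix with 0 columns. *)
Inductive ssd_run (R : fieldType) (m q0 : nat) :
  forall q : nat, 'M[R]_(q0, q) -> 'M[R]_(m, q) -> 'M[R]_(m, q) -> {p : nat & 'M[R]_(q0, p)} -> Prop :=
| SSD_trivial q (C : 'M[R]_(q0, q)) (A B : 'M[R]_(m, q)) :
    (forall v : 'cV[R]_(q + q), row_mx A B *m v = 0 -> v = 0) ->
    ssd_run C A B (existT _ 0%N (0 : 'M[R]_(q0, 0)))
| SSD_stop q (C : 'M[R]_(q0, q)) (A B : 'M[R]_(m, q)) p (Z : 'M[R]_(q + q, p)) :
    (0 < p)%N -> nullspace_basis (row_mx A B) Z -> (q <= p)%N ->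
    ssd_run C A B (existT _ q C)
| SSD_step q (C : 'M[R]_(q0, q)) (A B : 'M[R]_(m, q)) p (Z : 'M[R]_(q + q, p)) res :
    (0 < p)%N -> nullspace_basis (row_mx A B) Z -> (p < q)%N ->
    ssd_run (C *m usubmx Z) (A *m usubmx Z) (B *m usubmx Z) res ->
    ssd_run C A B res.

Definition SSD (R : fieldType) (m q : nat) (A B : 'M[R]_(m, q)) (res : {p : nat & 'M[R]_(q, p)}) : Prop :=
  ssd_run (1%:M : 'M[R]_q) A B res.

Definition Dmat (R : Type) (n Nd N : nat) (D : 'rV[R]_n -> 'rV[R]_Nd) (X : 'M[R]_(N, n)) : 'M[R]_(N, Nd) :=
  \matrix_(j < N) D (row j X).

(* ---------- Digraphs on the agents 'I_M ----------
   e j i  means that (j,i) is an edge, i.e. j is an in-neighbor of i. *)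
Definition dpath_len (M : nat) (e : rel 'I_M) (i j : 'I_M) (l : nat) : Prop :=
  exists s : seq 'I_M, size s = l /\ path e i s /\ last i s = j.

Definition strongly_connected (M : nat) (e : rel 'I_M) : Prop :=
  forall i j : 'I_M, exists l, dpath_len e i j l.

Definition diameter (M : nat) (e : rel 'I_M) (d : nat) : Prop :=
  (forall i j : 'I_M, exists2 l, (l <= d)%N & dpath_len e i j l) /\
  (exists i j : 'I_M, forall l, (l < d)%N -> ~ dpath_len e i j l).

(* ---------- The P-SSD algorithm over a constant digraph (as a relation) ----------
   C k i : the matrix C_k^i (packed with its number of columns),
   flag k i : flag_k^i (true = 1, false = 0). *)
Definition ncols (R : Type) (n : nat) (C : {p : nat & 'M[R]_(n, p)}) : nat := projT1 C.

Definition PSSD_run (R : fieldType) (Nd M : nat) (e : rel 'I_M)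
  (Nloc : 'I_M -> nat) (DXl DYl : forall i : 'I_M, 'M[R]_(Nloc i, Nd))
  (C : nat -> 'I_M -> {p : nat & 'M[R]_(Nd, p)}) (flag : nat -> 'I_M -> bool) : Prop :=
  (forall i, C 0%N i = existT _ Nd (1%:M : 'M[R]_Nd) /\ flag 0%N i = false) /\
  (forall (k : nat) (i : 'I_M),
     exists (p : nat) (Dk : 'M[R]_(Nd, p)) (Ek : {p' : nat & 'M[R]_(p, p')}),
       basis_of (fun v => forall j : 'I_M, (j = i \/ e j i) -> in_range (projT2 (C k j)) v) Dk /\
       SSD (DXl i *m Dk) (DYl i *m Dk) Ek /\
       (if (projT1 Ek < ncols (C k i))%N
        then C k.+1 i = existT _ (projT1 Ek) (Dk *m projT2 Ek) /\ flag k.+1 i = false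
        else C k.+1 i = C k i /\ flag k.+1 i = true)).

(* Main.v *)
Require Import Defs.
From HB Require Import structures.
From mathcomp Require Import all_boot all_order all_algebra.
From mathcomp Require Import reals zify.
Import GRing.Theory Num.Theory.
Local Open Scope ring_scope.
Set Implicit Arguments. Unset Strict Implicit.

Lemma in_rangeE (R : fieldType) n p (C : 'M[R]_(n, p)) v :
  in_range C v <-> (v^T <= C^T)%MS.
Proof.
split=> [[c ->]|/submxP [D HD]].
  by rewrite trmx_mul submxMl.
by exists D^T; rewrite -[v]trmxK HD trmx_mul trmxK.
Qed.

Lemma indepE (R : fieldType) s p (Z : 'M[R]_(s, p)) :
  lin_indep_cols Z <-> row_free Z^T.
Proof.
split=> [H|H c Hc].
  rewrite -kermx_eq0; apply/eqP/row_matrixP => i; rewrite row0.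
  apply: trmx_inj; rewrite trmx0; apply: H.
  by apply: trmx_inj; rewrite trmx_mul trmxK trmx0 -row_mul mulmx_ker row0.
apply: trmx_inj; rewrite trmx0; apply: (row_free_inj H).
by rewrite mul0mx -trmx_mul Hc trmx0.
Qed.

Lemma fcrE (R : fieldType) m q (A : 'M[R]_(m, q)) :
  full_col_rank A <-> row_free A^T.
Proof. by rewrite /full_col_rank /row_free mxrank_tr; split=> [->|/eqP]. Qed.

Lemma rfree_inj (R : fieldType) m n (A : 'M[R]_(m, n)) :
  (forall c : 'rV_m, c *m A = 0 -> c = 0) -> row_free A.
Proof.
move=> H; rewrite -kermx_eq0; apply/eqP/row_matrixP => i; rewrite row0.
by apply: H; rewrite -row_mul mulmx_ker row0.
Qed.

Lemma rfree_mul (R : fieldType) m n p (A : 'M[R]_(m, n)) (B : 'M[R]_(n, p)) :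
  row_free A -> row_free B -> row_free (A *m B).
Proof. by move=> HA HB; rewrite /row_free mxrankMfree. Qed.

Lemma vld_sym (R : fieldType) q m r (a b : 'M[R]_(q, m)) (S : 'M[R]_(r, q)) :
  row_free a -> row_free b -> (S *m b <= S *m a)%MS -> (S *m a <= S *m b)%MS.
Proof.
move=> Ha Hb H; rewrite -(mxrank_leqif_sup H).2.
by rewrite !mxrankMfree.
Qed.

Lemma vld_eq (R : fieldType) q m r (a b : 'M[R]_(q, m)) (S : 'M[R]_(r, q)) :
  row_free a -> row_free b -> (S *m b <= S *m a)%MS -> (S *m b == S *m a)%MS.
Proof.
by move=> Ha Hb H; apply/andP; split=> //; apply: vld_sym.
Qed.

Lemma ker_helper (R : fieldType) m q (A B : 'M[R]_(m, q)) (s t : 'rV[R]_q) :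
  row_mx A B *m (row_mx s t)^T = (s *m A^T + t *m B^T)^T.
Proof. by rewrite -[row_mx A B]trmxK -trmx_mul !tr_row_mx mul_row_col. Qed.

Lemma ker_row (R : fieldType) m q (A B : 'M[R]_(m, q)) (s : 'rV[R]_q) :
  (s *m A^T <= B^T)%MS -> exists t : 'rV[R]_q, row_mx A B *m (row_mx s t)^T = 0.
Proof.
case/submxP=> t Ht; exists (- t).
by rewrite ker_helper Ht mulNmx addrN trmx0.
Qed.

Lemma ns_zero (R : fieldType) r s p (Mx : 'M[R]_(r, s)) (Z : 'M[R]_(s, p)) :
  nullspace_basis Mx Z -> Mx *m Z = 0.
Proof.
case=> _ Hz; apply: trmx_inj; rewrite trmx0; apply/row_matrixP => j.
rewrite row0 trmx_mul row_mul -tr_col -trmx_mul.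
by rewrite (proj2 (Hz _)) ?trmx0 // in_rangeE tr_col row_sub.
Qed.

Lemma ssd_correct (R : fieldType) m q0 q (C : 'M[R]_(q0, q)) (A B : 'M[R]_(m, q)) res :
  ssd_run C A B res -> row_free A^T -> row_free B^T ->
  exists E : 'M[R]_(q, projT1 res), projT2 res = C *m E /\ row_free E^T /\
   (E^T *m B^T <= E^T *m A^T)%MS /\
   forall r (S : 'M[R]_(r, q)), (S *m B^T <= S *m A^T)%MS -> (S <= E^T)%MS.
Proof.
elim => {q C A B res}.
- move=> q C A B Hn HA HB; exists 0; split; first by rewrite mulmx0.
  split; first by rewrite -row_leq_rank.
  split; first by rewrite trmx0 !mul0mx sub0mx.
  move=> r S H; have H' := vld_sym HA HB H.
  apply/row_subP => i; suff -> : row i S = 0 by rewrite sub0mx.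
  have : (row i S *m A^T <= B^T)%MS.
    rewrite -row_mul; apply: submx_trans (row_sub _ _) _.
    by apply: submx_trans H' _; apply: submxMl.
  case/ker_row => t Ht; have := Hn _ Ht.
  move/(congr1 trmx); rewrite trmxK trmx0 => /eqP; rewrite row_mx_eq0.
  by case/andP => /eqP.
- move=> q C A B p Z Hp Hz Hqp HA HB; exists 1%:M; split; first by rewrite mulmx1.
  split; first by rewrite trmx1 row_free_unit unitmx1.
  split; last by move=> r S _; rewrite trmx1 submx1.
  rewrite trmx1 !mul1mx.
  have HZ : (Z^T <= kermx (row_mx A B)^T)%MS.
    by apply/sub_kermxP; rewrite -trmx_mul (ns_zero Hz) trmx0.
  have rZ : \rank Z^T = p by apply/eqP; rewrite -/(row_free _) -indepE; case: Hz.
  have := mxrankS HZ; rewrite mxrank_ker rZ => Hr.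
  have HA' : (A^T <= (row_mx A B)^T)%MS.
    by apply/submxP; exists (row_mx 1%:M 0); rewrite tr_row_mx mul_row_col mul1mx mul0mx addr0.
  have HB' : (B^T <= (row_mx A B)^T)%MS.
    by apply/submxP; exists (row_mx 0 1%:M); rewrite tr_row_mx mul_row_col mul1mx mul0mx add0r.
  have rA : \rank A^T = q by apply/eqP.
  apply: submx_trans HB' _; rewrite -(mxrank_leqif_sup HA').2 rA.
  have := mxrankS HA'; rewrite rA.
  move: Hr Hqp; set x := \rank _; lia.
- move=> q C A B p Z res Hp Hz Hpq Hrun IH HA HB.
  set Zu := usubmx Z.
  have HZf : row_free Z^T by rewrite -indepE; case: Hz.
  have HZ0 := ns_zero Hz.
  have HZu : row_free Zu^T.
    apply: rfree_inj => c Hc.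
    have Hc' : c *m Z^T = row_mx 0 (c *m rsubmx Z^T).
      by rewrite -Hc /Zu trmx_usub -mul_mx_row hsubmxK.
    have : row_mx A B *m (c *m Z^T)^T = 0 by rewrite trmx_mul trmxK mulmxA HZ0 mul0mx.
    rewrite Hc' ker_helper mul0mx add0r => /(congr1 trmx); rewrite trmxK trmx0.
    rewrite -(mul0mx _ B^T) => /(row_free_inj HB) Hw.
    by apply: (row_free_inj HZf); rewrite mul0mx Hc' Hw row_mx0.
  have HA' : row_free (A *m Zu)^T by rewrite trmx_mul rfree_mul.
  have HB' : row_free (B *m Zu)^T by rewrite trmx_mul rfree_mul.
  have [E [H1 [H2 [H3 H4]]]] := IH HA' HB'.
  exists (Zu *m E); split; first by rewrite H1 mulmxA.
  split; first by rewrite trmx_mul rfree_mul.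
  split; first by move: H3; rewrite !trmx_mul !mulmxA.
  move=> r S H; have H' := vld_sym HA HB H.
  have Hsub : (S <= Zu^T)%MS.
    apply/row_subP => i.
    have : (row i S *m A^T <= B^T)%MS.
      rewrite -row_mul; apply: submx_trans (row_sub _ _) _.
      by apply: submx_trans H' _; apply: submxMl.
    case/ker_row => t Ht.
    have := proj1 (proj2 Hz _) Ht; rewrite in_rangeE trmxK.
    case/submxP => D HD.
    move: HD; rewrite -[Z^T]hsubmxK mul_mx_row => /eq_row_mx [-> _].
    by rewrite /Zu trmx_usub submxMl.
  have := mulmxKpV Hsub; set S' := S *m pinvmx _ => HS.
  rewrite -HS trmx_mul submxMr // H4 //.
  by rewrite !trmx_mul !mulmxA HS.
Qed.


Definition vdata (R : fieldType) Nl Nd (DX DY : 'M[R]_(Nl, Nd)) r (S : 'M[R]_(r, Nd)) :=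
  (S *m DY^T <= S *m DX^T)%MS.

Lemma transfer_row (R : fieldType) m1 m2 q (P Q : 'M[R]_(m1,q)) (P' Q' : 'M[R]_(m2,q))
  (r : 'I_m1) (k : 'I_m2) (s t : 'rV[R]_q) :
  row r (row_mx P Q) = row k (row_mx P' Q') -> s *m Q'^T = t *m P'^T ->
  (s *m Q^T) 0 r = (t *m P^T) 0 r.
Proof.
rewrite !row_row_mx => /eq_row_mx [HP HQ] H.
have eQ : forall x, Q r x = Q' k x.
  by move=> x; have := congr1 (fun A : 'M[R]_(1,q) => A 0 x) HQ; rewrite !mxE.
have eP : forall x, P r x = P' k x.
  by move=> x; have := congr1 (fun A : 'M[R]_(1,q) => A 0 x) HP; rewrite !mxE.
transitivity ((s *m Q'^T) 0 k); first by rewrite !mxE; apply: eq_bigr => x _; rewrite !mxE eQ.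
by rewrite H !mxE; apply: eq_bigr => x _; rewrite !mxE eP.
Qed.

Lemma transfer (R : fieldType) m1 m2 q (P Q : 'M[R]_(m1,q)) (P' Q' : 'M[R]_(m2,q))
  (s t : 'rV[R]_q) :
  rows_in (row_mx P Q) (row_mx P' Q') -> s *m Q'^T = t *m P'^T -> s *m Q^T = t *m P^T.
Proof.
move=> Hin H; apply/rowP => r; have [k Hk] := Hin r.
exact: transfer_row Hk H.
Qed.

Lemma vdataP (R : fieldType) Nl Nd (DX DY : 'M[R]_(Nl, Nd)) r (S : 'M[R]_(r, Nd)) :
  vdata DX DY S <-> forall s : 'rV_Nd, (s <= S)%MS ->
     exists2 t : 'rV_Nd, (t <= S)%MS & s *m DY^T = t *m DX^T.
Proof.
split=> [H s Hs|H].
  have : (s *m DY^T <= S *m DX^T)%MS by apply: submx_trans H; apply: submxMr.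
  by case/submxP => u Hu; exists (u *m S); rewrite ?submxMl // Hu mulmxA.
apply/row_subP => i; rewrite row_mul.
have [t Ht ->] := H (row i S) (row_sub i S).
by case/submxP: Ht => u ->; rewrite -mulmxA submxMl.
Qed.

Lemma vdata_eq (R : fieldType) Nl Nd (DX DY : 'M[R]_(Nl, Nd)) r r' (S : 'M[R]_(r, Nd))
  (S' : 'M[R]_(r', Nd)) : (S == S')%MS -> vdata DX DY S -> vdata DX DY S'.
Proof.
case/andP => H1 H2 /vdataP H; apply/vdataP => s Hs.
have [t Ht Heq] := H s (submx_trans Hs H2).
by exists t => //; apply: submx_trans H1.
Qed.

Lemma vdata_sub (R : fieldType) N1 N2 Nd (DX DY : 'M[R]_(N1, Nd)) (DX' DY' : 'M[R]_(N2, Nd))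
  r (S : 'M[R]_(r, Nd)) :
  rows_in (row_mx DX' DY') (row_mx DX DY) -> vdata DX DY S -> vdata DX' DY' S.
Proof.
move=> Hin /vdataP H; apply/vdataP => s Hs.
have [t Ht Heq] := H s Hs; exists t => //; exact: transfer Hin Heq.
Qed.

Lemma rfree_locX (R : fieldType) N1 N2 Nd (DX DY : 'M[R]_(N1, Nd)) (DX' DY' : 'M[R]_(N2, Nd)) :
  rows_in (row_mx DX' DY') (row_mx DX DY) -> row_free DX'^T -> row_free DX^T.
Proof.
move=> Hin Hf; apply: rfree_inj => c Hc; apply: (row_free_inj Hf).
by rewrite mul0mx -(transfer (s := 0) (t := c) Hin) ?mul0mx // Hc.
Qed.

Lemma rfree_locY (R : fieldType) N1 N2 Nd (DX DY : 'M[R]_(N1, Nd)) (DX' DY' : 'M[R]_(N2, Nd)) :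
  rows_in (row_mx DX' DY') (row_mx DX DY) -> row_free DY'^T -> row_free DY^T.
Proof.
move=> Hin Hf; apply: rfree_inj => c Hc; apply: (row_free_inj Hf).
by rewrite mul0mx (transfer (s := c) (t := 0) Hin) ?mul0mx // Hc.
Qed.

Lemma vdata_cap (R : fieldType) M Nd (Nloc : 'I_M -> nat)
  (DXl DYl : forall i : 'I_M, 'M[R]_(Nloc i, Nd)) Ns (DXs DYs : 'M[R]_(Ns, Nd))
  (V : 'I_M -> 'M[R]_Nd) (P : pred 'I_M) (i : 'I_M) :
  row_free DXs^T -> (forall l, rows_in (row_mx DXs DYs) (row_mx (DXl l) (DYl l))) ->
  (forall l, P l -> vdata (DXl l) (DYl l) (V l)) -> P i ->
  vdata (DXl i) (DYl i) (\bigcap_(l | P l) V l)%MS.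
Proof.
move=> Hs Hin HV Pi; apply/vdataP => s /sub_bigcapmxP Hsl.
have [t Ht Heq] := (proj1 (vdataP _ _ _) (HV i Pi)) s (Hsl i Pi).
exists t => //; apply/sub_bigcapmxP => l Pl.
have [tl Htl Heql] := (proj1 (vdataP _ _ _) (HV l Pl)) s (Hsl l Pl).
suff -> : t = tl by [].
apply: (row_free_inj Hs); rewrite /=.
by rewrite -(transfer (Hin i) Heq) (transfer (Hin l) Heql).
Qed.

Lemma vdata_full (R : fieldType) M Nd (Nloc : 'I_M -> nat)
  (DXl DYl : forall i : 'I_M, 'M[R]_(Nloc i, Nd)) Ns (DXs DYs : 'M[R]_(Ns, Nd))
  N (DX DY : 'M[R]_(N, Nd)) (V : 'I_M -> 'M[R]_Nd) (l0 : 'I_M) :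
  row_free DXs^T -> (forall l, rows_in (row_mx DXs DYs) (row_mx (DXl l) (DYl l))) ->
  (forall l, vdata (DXl l) (DYl l) (V l)) ->
  (forall k : 'I_N, exists (l : 'I_M) (j : 'I_(Nloc l)),
      row j (row_mx (DXl l) (DYl l)) = row k (row_mx DX DY)) ->
  vdata DX DY (\bigcap_(l | true) V l)%MS.
Proof.
move=> Hs Hin HV Hun; apply/vdataP => s /sub_bigcapmxP Hsl.
have [t Ht Heq] := (proj1 (vdataP _ _ _) (HV l0)) s (Hsl l0 erefl).
have Hall : forall l, (t <= V l)%MS /\ s *m (DYl l)^T = t *m (DXl l)^T.
  move=> l; have [tl Htl Heql] := (proj1 (vdataP _ _ _) (HV l)) s (Hsl l erefl).
  suff -> : t = tl by [].
  apply: (row_free_inj Hs); rewrite /=.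
  by rewrite -(transfer (Hin l0) Heq) (transfer (Hin l) Heql).
exists t; first by apply/sub_bigcapmxP => l _; case: (Hall l).
apply/rowP => r.
have [l [j Hj]] := Hun r.
by apply: (transfer_row (esym Hj)); case: (Hall l).
Qed.

Lemma step_gen (R : fieldType) Nl Nd p (DX DY : 'M[R]_(Nl, Nd)) (Dk : 'M[R]_(Nd, p)) Ek :
  row_free DX^T -> row_free DY^T -> row_free Dk^T -> SSD (DX *m Dk) (DY *m Dk) Ek ->
  ((Dk *m projT2 Ek)^T <= Dk^T)%MS /\ row_free (Dk *m projT2 Ek)^T /\
  vdata DX DY (Dk *m projT2 Ek)^T /\
  forall r (S : 'M[R]_(r, Nd)), vdata DX DY S -> (S <= Dk^T)%MS -> (S <= (Dk *m projT2 Ek)^T)%MS.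
Proof.
move=> HX HY HD Hssd.
have HA : row_free (DX *m Dk)^T by rewrite trmx_mul rfree_mul.
have HB : row_free (DY *m Dk)^T by rewrite trmx_mul rfree_mul.
have [E [HE [Hf [Hv Hm]]]] := ssd_correct Hssd HA HB.
rewrite HE mul1mx trmx_mul.
split; first exact: submxMl.
split; first exact: rfree_mul.
split; first by move: Hv; rewrite /vdata !trmx_mul !mulmxA.
move=> r S HS Hsub; have := mulmxKpV Hsub; set S' := S *m pinvmx _ => HSS.
rewrite -HSS submxMr // Hm //.
by move: HS; rewrite /vdata -HSS !trmx_mul !mulmxA.
Qed.

Fixpoint reach M (e : rel 'I_M) (k : nat) (l i : 'I_M) : bool :=
  if k is k'.+1 then reach e k' l i || [exists j, e j i && reach e k' l j] else l == i.

Lemma reach_mono M (e : rel 'I_M) k k' l i : (k <= k')%N -> reach e k l i -> reach e k' l i.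
Proof.
elim: k' => [|k' IH]; first by rewrite leqn0 => /eqP ->.
rewrite leq_eqVlt => /orP [/eqP -> //|Hk] H.
by rewrite /= IH.
Qed.

Lemma reach_refl M (e : rel 'I_M) k i : reach e k i i.
Proof. by apply: (@reach_mono _ _ 0); rewrite /= ?eqxx. Qed.

Lemma reach_cons M (e : rel 'I_M) n l x i : e l x -> reach e n x i -> reach e n.+1 l i.
Proof.
elim: n i => [|n IH] i Hl.
  move=> /= /eqP <-; apply/orP; right; apply/existsP; exists l; by rewrite Hl eqxx.
move=> H.
change (reach e n.+1 l i || [exists j, e j i && reach e n.+1 l j]).
move: H; change (reach e n x i || [exists j, e j i && reach e n x j] -> 
   reach e n.+1 l i || [exists j, e j i && reach e n.+1 l j]).
case/orP => [H|/existsP [j /andP [Hj H]]].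
  by rewrite (IH i Hl H).
apply/orP; right; apply/existsP; exists j; by rewrite Hj (IH j Hl H).
Qed.

Lemma dpath_reach M (e : rel 'I_M) l i len : dpath_len e l i len -> reach e len l i.
Proof.
case=> s [Hs [Hp Hl]]; elim: s l len Hs Hp Hl => [|x s IH] l len /= Hs Hp Hl.
  by rewrite -Hs Hl /= eqxx.
case/andP: Hp => Hlx Hp; rewrite -Hs; apply: (reach_cons Hlx).
exact: IH.
Qed.

Lemma cap_cong (R : fieldType) (I : finType) (P : pred I) n (A B : I -> 'M[R]_n) :
  (forall j, P j -> (A j :=: B j)%MS) ->
  ((\bigcap_(j | P j) A j) :=: (\bigcap_(j | P j) B j))%MS.
Proof.
move=> H; apply/eqmxP/andP; split; apply/sub_bigcapmxP => j Pj.
  by apply: (bigcapmx_inf j) => //; rewrite H.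
by apply: (bigcapmx_inf j) => //; rewrite -H.
Qed.

Lemma cap_reach (R : fieldType) M (e : rel 'I_M) Nd (V : 'I_M -> 'M[R]_Nd) k i :
  ((\bigcap_(j | (j == i) || e j i) \bigcap_(l | reach e k l j) V l) :=:
   \bigcap_(l | reach e k.+1 l i) V l)%MS.
Proof.
apply/eqmxP/andP; split.
  apply/sub_bigcapmxP => l /= /orP [H|/existsP [j /andP [Hj H]]].
    apply: (bigcapmx_inf i); first by rewrite eqxx.
    exact: (bigcapmx_inf l) H (submx_refl _).
  apply: (bigcapmx_inf j); first by rewrite Hj orbT.
  exact: (bigcapmx_inf l) H (submx_refl _).
apply/sub_bigcapmxP => j Hj; apply/sub_bigcapmxP => l Hl.
apply: (bigcapmx_inf l) _ (submx_refl _) => /=.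
case/orP: Hj => [/eqP Hj|Hj]; first by rewrite -Hj Hl.
by apply/orP; right; apply/existsP; exists j; rewrite Hj Hl.
Qed.

Lemma range_eqE (R : fieldType) n p1 p2 (C1 : 'M[R]_(n, p1)) (C2 : 'M[R]_(n, p2)) :
  (C1^T == C2^T)%MS -> range_eq C1 C2.
Proof.
case/andP => H1 H2 v; rewrite !in_rangeE; split => H; exact: submx_trans H _.
Qed.

Lemma basis_cap (R : fieldType) M (e : rel 'I_M) Nd (pj : 'I_M -> nat)
  (Cm : forall j, 'M[R]_(Nd, pj j)) (i : 'I_M) p (Dk : 'M[R]_(Nd, p)) :
  Defs.basis_of (fun v => forall j : 'I_M, (j = i \/ e j i) -> in_range (Cm j) v) Dk ->
  row_free Dk^T /\ (Dk^T :=: \bigcap_(j | (j == i) || e j i) <<(Cm j)^T>>)%MS.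
Proof.
case=> Hind Hiff; split; first by rewrite -indepE.
apply/eqmxP/andP; split.
  apply/sub_bigcapmxP => j Hj; apply/row_subP => r; rewrite genmxE.
  have : in_range Dk (row r Dk^T)^T by rewrite in_rangeE trmxK row_sub.
  move/Hiff => H.
  have : in_range (Cm j) (row r Dk^T)^T.
    by apply: H; case/orP: Hj => [/eqP ->|]; [left|right].
  by rewrite in_rangeE trmxK.
apply/row_subP => r; set w := row r _.
have Hw : (w <= \bigcap_(j | (j == i) || e j i) <<(Cm j)^T>>)%MS by apply: row_sub.
rewrite -[w]trmxK -in_rangeE; apply/Hiff => j Hj.
rewrite in_rangeE trmxK.
move/sub_bigcapmxP: Hw => /(_ j); rewrite genmxE; apply.
by case: Hj => [->|->]; rewrite ?eqxx ?orbT.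
Qed.

Unset Implicit Arguments.
Set Strict Implicit.

Theorem theorem5p3
  (R : realType) (n Nd N : nat)
  (Mset : 'rV[R]_n -> Prop) (T : 'rV[R]_n -> 'rV[R]_n)
  (D : 'rV[R]_n -> 'rV[R]_Nd)
  (X Y : 'M[R]_(N, n))
  (M : nat) (Nloc : 'I_M -> nat) (Xl Yl : forall i : 'I_M, 'M[R]_(Nloc i, n))
  (Ns : nat) (Xs Ys : 'M[R]_(Ns, n))
  (e : rel 'I_M) (d : nat)
  (C : nat -> 'I_M -> {p : nat & 'M[R]_(Nd, p)}) (flag : nat -> 'I_M -> bool)
  (CSSD : {p : nat & 'M[R]_(Nd, p)}) :
  (* data: T maps M into M, y_j = T(x_j) with x_j in M *)
  (forall x, Mset x -> Mset (T x)) ->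
  (forall j : 'I_N, Mset (row j X) /\ row j Y = T (row j X)) ->
  full_col_rank (Dmat D X) -> full_col_rank (Dmat D Y) ->
  (* each agent holds a subset of the snapshot pairs *)
  (forall (i : 'I_M) (j : 'I_(Nloc i)), exists k : 'I_N,
      row j (Xl i) = row k X /\ row j (Yl i) = row k Y) ->
  (* the union of the agents' rows of [D(X_i), D(Y_i)] equals the rows of [D(X), D(Y)] *)
  (forall i : 'I_M, rows_in (row_mx (Dmat D (Xl i)) (Dmat D (Yl i))) (row_mx (Dmat D X) (Dmat D Y))) ->
  (forall k : 'I_N, exists (i : 'I_M) (j : 'I_(Nloc i)),
      row j (row_mx (Dmat D (Xl i)) (Dmat D (Yl i))) = row k (row_mx (Dmat D X) (Dmat D Y))) ->
  (* signature matrices *)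
  full_col_rank (Dmat D Xs) -> full_col_rank (Dmat D Ys) ->
  (forall i : 'I_M, rows_in (row_mx (Dmat D Xs) (Dmat D Ys)) (row_mx (Dmat D (Xl i)) (Dmat D (Yl i)))) ->
  (* constant strongly connected digraph with diameter d *)
  strongly_connected e -> diameter e d ->
  (* an execution of P-SSD, and C_SSD = SSD(D(X), D(Y)) *)
  PSSD_run e (fun i => Dmat D (Xl i)) (fun i => Dmat D (Yl i)) C flag ->
  SSD (Dmat D X) (Dmat D Y) CSSD ->
  (forall (k : nat) (i : 'I_M), (d.+1 <= k)%N ->
      range_eq (projT2 (C k i)) (projT2 CSSD) /\
      range_eq (Dmat D X *m projT2 (C k i)) (Dmat D Y *m projT2 (C k i))) /\
  (forall i : 'I_M, flag d.+2 i = true).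
Proof.
move=> _ _ HfX HfY _ Hloc Hun HfXs HfYs Hsig _ [Hd1 [l0 _]] [H0 Hstep] Hssd.
have HXs : row_free (Dmat D Xs)^T by rewrite -fcrE.
have HYs : row_free (Dmat D Ys)^T by rewrite -fcrE.
have HX : row_free (Dmat D X)^T by rewrite -fcrE.
have HY : row_free (Dmat D Y)^T by rewrite -fcrE.
have HXl : forall l, row_free (Dmat D (Xl l))^T := fun l => rfree_locX (Hsig l) HXs.
have HYl : forall l, row_free (Dmat D (Yl l))^T := fun l => rfree_locY (Hsig l) HYs.
pose Ct k i := (projT2 (C k i))^T.
pose V l := <<Ct 1%N l>>%MS.
pose S k i := (\bigcap_(l | reach e k l i) V l)%MS.
have Vprop : forall l, vdata (Dmat D (Xl l)) (Dmat D (Yl l)) (V l) /\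
    forall r (S0 : 'M[R]_(r, Nd)), vdata (Dmat D (Xl l)) (Dmat D (Yl l)) S0 -> (S0 <= V l)%MS.
  move=> l; have [p [Dk [Ek [Hb [Hs Hif]]]]] := Hstep 0%N l.
  have [HDf HDeq] := basis_cap Hb.
  have H1D : (1%:M <= Dk^T)%MS.
    rewrite HDeq; apply/sub_bigcapmxP => j _.
    by rewrite genmxE (proj1 (H0 j)) /= trmx1 submx_refl.
  have [HF1 [HF2 [HF3 HF4]]] := step_gen (HXl l) (HYl l) HDf Hs.
  have HFV : ((Dk *m projT2 Ek)^T :=: V l)%MS.
    move: Hif; case: ifP => Hlt [HC _].
      by rewrite /V /Ct HC /=; apply: eqmx_sym; apply: genmxE.
    move: Hlt; rewrite /V /Ct HC /ncols (proj1 (H0 l)) /= => Hlt.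
    apply: eqmx_trans (eqmx_sym (genmxE _)); rewrite trmx1.
    apply/eqmxP/andP; split; first exact: submx1.
    rewrite sub1mx /row_full; move: (rank_leq_col (Dk *m projT2 Ek)^T).
    rewrite (eqP HF2) => Hle; move/negbT: Hlt; rewrite -leqNgt => Hge; by rewrite eqn_leq Hle Hge.
  split; first by apply: vdata_eq HF3; apply/eqmxP.
  move=> r S0 HS0; rewrite -HFV; apply: HF4 HS0 _.
  exact: submx_trans (submx1 _) H1D.
have Hkey : forall k i, (forall j, (Ct k.+1 j :=: S k j)%MS /\ row_free (Ct k.+1 j)) ->
  exists q (F : 'M[R]_(Nd, q)), (F^T :=: S k.+1 i)%MS /\ row_free F^T /\
   (if (q < ncols (C k.+1 i))%N then C k.+2 i = existT _ q F /\ flag k.+2 i = false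
    else C k.+2 i = C k.+1 i /\ flag k.+2 i = true).
  move=> k i HI; have [p [Dk [Ek [Hb [Hs Hif]]]]] := Hstep k.+1 i.
  have [HDf HDeq] := basis_cap Hb.
  have [HF1 [HF2 [HF3 HF4]]] := step_gen (HXl i) (HYl i) HDf Hs.
  exists (projT1 Ek), (Dk *m projT2 Ek); split; last by split.
  have HDS : (Dk^T :=: S k.+1 i)%MS.
    apply: (eqmx_trans HDeq); rewrite /S; apply: (eqmx_trans _ (@cap_reach _ _ e _ V k i)).
    apply: cap_cong => j _; apply: eqmx_trans (genmxE _) _; exact: (HI j).1.
  have HU : vdata (Dmat D (Xl i)) (Dmat D (Yl i)) (S k.+1 i).
    apply: (vdata_cap (DXl := fun l => Dmat D (Xl l)) (DYl := fun l => Dmat D (Yl l))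
              (P := fun l => reach e k.+1 l i) HXs Hsig) => //.
      by move=> l _; exact: (Vprop l).1.
    exact: reach_refl.
  apply/eqmxP/andP; split; first by rewrite -HDS.
  by apply: HF4 HU _; rewrite HDS submx_refl.
have Inv : forall k j, (Ct k.+1 j :=: S k j)%MS /\ row_free (Ct k.+1 j).
  elim=> [|k IH] j.
    split.
      apply: (eqmx_trans (eqmx_sym (genmxE (Ct 1%N j)))); rewrite /S.
      apply/eqmxP/andP; split.
        by apply/sub_bigcapmxP => l /= /eqP ->; rewrite submx_refl.
      by apply: (bigcapmx_inf j); rewrite /= ?eqxx ?submx_refl.
    have [p [Dk [Ek [Hb [Hs Hif]]]]] := Hstep 0%N j.
    have [HDf HDeq] := basis_cap Hb.
    have [HF1 [HF2 [HF3 HF4]]] := step_gen (HXl j) (HYl j) HDf Hs.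
    move: Hif; case: ifP => _ [HC _]; rewrite /Ct HC //=.
    by rewrite (proj1 (H0 j)) /= trmx1 row_free_unit unitmx1.
  have [q [F [HF [HFf Hif]]]] := Hkey k j IH.
  move: Hif; case: ifP => Hlt [HC _]; rewrite /Ct HC //=.
  have [HCS HCf] := IH j.
  split => //.
  have Hsub : (S k.+1 j <= S k j)%MS.
    apply/sub_bigcapmxP => l Hl; apply: (bigcapmx_inf l) _ (submx_refl _).
    exact: reach_mono (leqnSn k) Hl.
  have r1 : \rank (S k.+1 j) = q by rewrite -HF (eqP HFf).
  have r2 : \rank (S k j) = ncols (C k.+1 j) by rewrite -HCS (eqP HCf).
  apply: eqmx_trans HCS _; apply/eqmxP/andP; split => //.
  rewrite -(mxrank_leqif_sup Hsub).2 r1 r2.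
  have := mxrankS Hsub; rewrite r1 r2 => Hle; apply/eqP; move/negbT: Hlt; lia.
have [E [HE [HEf [HEv HEm]]]] := ssd_correct Hssd HX HY.
pose Eall := (\bigcap_(l | true) V l)%MS.
have HEall : (Eall :=: E^T)%MS.
  apply/eqmxP/andP; split.
    apply: HEm.
    exact: (vdata_full (DXl := fun l => Dmat D (Xl l)) (DYl := fun l => Dmat D (Yl l))
              l0 HXs Hsig (fun l => (Vprop l).1) Hun).
  apply/sub_bigcapmxP => l _; apply: (Vprop l).2; exact: vdata_sub (Hloc l) HEv.
have HSall : forall k i, (d <= k)%N -> S k i = Eall.
  move=> k i Hk; apply: eq_bigl => l; apply: reach_mono Hk _.
  have [len Hlen Hp] := Hd1 l i; exact: reach_mono Hlen (dpath_reach Hp).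
split.
  move=> [|k] i // Hk.
  have [HCS HCf] := Inv k i.
  have HC : (Ct k.+1 i :=: E^T)%MS.
    by apply: eqmx_trans HCS _; rewrite (HSall k i Hk).
  split.
    by apply: range_eqE; rewrite HE mul1mx; apply/eqmxP; exact: HC.
  apply: range_eqE; rewrite !trmx_mul.
  rewrite !(eqmxMr _ HC).
  by have /andP [h1 h2] := vld_eq HX HY HEv; apply/andP.
move=> i; have [q [F [HF [HFf Hif]]]] := Hkey d i (Inv d).
move: Hif; case: ifP => Hlt [_ Hfl] //.
have e1 : q = \rank Eall by rewrite -(HSall d.+1 i (leqnSn d)) -HF (eqP HFf).
have e2 : ncols (C d.+1 i) = \rank Eall.
  have [HCS HCf] := Inv d i.
  by rewrite -(HSall d i (leqnn d)) -HCS (eqP HCf).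
by rewrite e1 e2 ltnn in Hlt.
Qed.
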